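(* Let $\mathbb{C}$ be a pointed protomodular category. Every normal subobject (normal monomorphism) of a proto-complete object of $\mathbb{C}$ is a characteristic monomorphism.
   Context: A pointed category with finite limits is protomodular if the split short five lemma holds. A normal monomorphism is a kernel of some morphism; a protosplit monomorphism is a kernel of a split epimorphism. An object $X$ is proto-complete if every protosplit monomorphism with domain $X$ is a split monomorphism. A monomorphism $m:S\to Y$ is Bourn-normal if there is an equivalence relation $(R,r_1,r_2)$ on $Y$ and $\tilde m:S\times S\to R$ with $r_1\tilde m=m\pi_1$, $r_2\tilde m=m\pi_2$ and the square $r_1\tilde m=m\pi_1$ a pullback. A morphism $u:S\to X$ is a characteristic monomorphism if for every Bourn-normal monomorphism $n:X\to Y$ the composite $nu$ is a Bourn-normal monomorphism. *)

(* Defs.v *)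
Set Implicit Arguments.
Unset Strict Implicit.

Record Category := {
  Ob :> Type;
  Hom : Ob -> Ob -> Type;
  comp : forall a b c : Ob, Hom b c -> Hom a b -> Hom a c;
  idm : forall a : Ob, Hom a a;
  comp_assoc : forall a b c d (f : Hom c d) (g : Hom b c) (h : Hom a b),
      comp f (comp g h) = comp (comp f g) h;
  comp_id_l : forall a b (f : Hom a b), comp (idm b) f = f;
  comp_id_r : forall a b (f : Hom a b), comp f (idm a) = f
}.

Arguments comp {c a b c0} f g : rename.
Arguments idm {c} a : rename.
Arguments Hom : clear implicits.

Section Defs.
Variable C : Category.

Definition is_mono {a b : C} (m : Hom C a b) : Prop :=
  forall x (f g : Hom C x a), comp m f = comp m g -> f = g.

Definition is_iso {a b : C} (f : Hom C a b) : Prop :=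
  exists g : Hom C b a, comp g f = idm a /\ comp f g = idm b.

Definition is_split_mono {a b : C} (m : Hom C a b) : Prop :=
  exists r : Hom C b a, comp r m = idm a.

Definition is_split_epi {a b : C} (p : Hom C a b) : Prop :=
  exists s : Hom C b a, comp p s = idm b.

Definition is_terminal (t : C) : Prop :=
  forall a, exists f : Hom C a t, forall g : Hom C a t, g = f.

Definition is_initial (t : C) : Prop :=
  forall a, exists f : Hom C t a, forall g : Hom C t a, g = f.

Definition is_pullback {A B Y P : C} (f : Hom C A Y) (g : Hom C B Y)
    (p1 : Hom C P A) (p2 : Hom C P B) : Prop :=
  comp f p1 = comp g p2 /\
  forall Q (q1 : Hom C Q A) (q2 : Hom C Q B), comp f q1 = comp g q2 ->
    exists h : Hom C Q P, comp p1 h = q1 /\ comp p2 h = q2 /\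
      forall h' : Hom C Q P, comp p1 h' = q1 -> comp p2 h' = q2 -> h' = h.

Definition is_product {A B P : C} (p1 : Hom C P A) (p2 : Hom C P B) : Prop :=
  forall Q (q1 : Hom C Q A) (q2 : Hom C Q B),
    exists h : Hom C Q P, comp p1 h = q1 /\ comp p2 h = q2 /\
      forall h' : Hom C Q P, comp p1 h' = q1 -> comp p2 h' = q2 -> h' = h.

Definition has_pullbacks : Prop :=
  forall A B Y (f : Hom C A Y) (g : Hom C B Y),
    exists P (p1 : Hom C P A) (p2 : Hom C P B), is_pullback f g p1 p2.

Definition has_finite_limits : Prop :=
  (exists t : C, is_terminal t) /\ has_pullbacks.

Definition is_zero_object (z : C) : Prop := is_initial z /\ is_terminal z.

Definition pointed : Prop := exists z : C, is_zero_object z.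

Definition is_zero_mor {a b : C} (f : Hom C a b) : Prop :=
  exists z (g : Hom C a z) (h : Hom C z b), is_zero_object z /\ f = comp h g.

Definition is_kernel {K A B : C} (k : Hom C K A) (f : Hom C A B) : Prop :=
  is_zero_mor (comp f k) /\
  forall Q (q : Hom C Q A), is_zero_mor (comp f q) ->
    exists h : Hom C Q K, comp k h = q /\
      forall h' : Hom C Q K, comp k h' = q -> h' = h.

Definition split_short_five_lemma : Prop :=
  forall (K A B K' A' B' : C)
         (k : Hom C K A) (p : Hom C A B) (s : Hom C B A)
         (k' : Hom C K' A') (p' : Hom C A' B') (s' : Hom C B' A')
         (u : Hom C K K') (v : Hom C A A') (w : Hom C B B'),
    is_kernel k p -> comp p s = idm B ->
    is_kernel k' p' -> comp p' s' = idm B' ->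
    comp v k = comp k' u -> comp p' v = comp w p -> comp v s = comp s' w ->
    is_iso u -> is_iso w -> is_iso v.

Definition protomodular : Prop := split_short_five_lemma.

Definition is_normal_mono {S X : C} (m : Hom C S X) : Prop :=
  exists Y (f : Hom C X Y), is_kernel m f.

Definition is_protosplit_mono {S X : C} (m : Hom C S X) : Prop :=
  exists Y (f : Hom C X Y), is_split_epi f /\ is_kernel m f.

Definition proto_complete (X : C) : Prop :=
  forall Y (m : Hom C X Y), is_protosplit_mono m -> is_split_mono m.

Definition is_equivalence_relation {R Y : C} (r1 r2 : Hom C R Y) : Prop :=
  (forall Q (f g : Hom C Q R), comp r1 f = comp r1 g -> comp r2 f = comp r2 g -> f = g) /\
  (exists d : Hom C Y R, comp r1 d = idm Y /\ comp r2 d = idm Y) /\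
  (exists t : Hom C R R, comp r1 t = r2 /\ comp r2 t = r1) /\
  (forall P (q1 q2 : Hom C P R), is_pullback r2 r1 q1 q2 ->
     exists t : Hom C P R, comp r1 t = comp r1 q1 /\ comp r2 t = comp r2 q2).

Definition is_bourn_normal {S Y : C} (m : Hom C S Y) : Prop :=
  is_mono m /\
  exists (R : C) (r1 r2 : Hom C R Y), is_equivalence_relation r1 r2 /\
  exists (SS : C) (pi1 pi2 : Hom C SS S), is_product pi1 pi2 /\
  exists mt : Hom C SS R,
    comp r1 mt = comp m pi1 /\ comp r2 mt = comp m pi2 /\
    is_pullback r1 m mt pi1.

Definition is_characteristic {S X : C} (u : Hom C S X) : Prop :=
  forall Y (n : Hom C X Y), is_bourn_normal n -> is_bourn_normal (comp n u).

End Defs.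

(* Main.v *)
Require Import Defs.

Section H.
Context {C : Category}.
Local Notation "f ∘ g" := (comp f g) (at level 40, left associativity).

Lemma comp_rw {a b c x : C} {f : Hom C b c} {g : Hom C a b} {h : Hom C a c}
  (H : f ∘ g = h) (y : Hom C x a) : f ∘ (g ∘ y) = h ∘ y.
Proof. rewrite comp_assoc, H. reflexivity. Qed.

Lemma comp_rw3 {a b c d x : C} {f : Hom C c d} {g : Hom C b c} {g' : Hom C a b}
  {h : Hom C a d} (H : f ∘ (g ∘ g') = h) (y : Hom C x a) :
  f ∘ (g ∘ (g' ∘ y)) = h ∘ y.
Proof. rewrite <- H, !comp_assoc. reflexivity. Qed.

Lemma zero_unique {a b : C} (f g : Hom C a b) :
  is_zero_mor f -> is_zero_mor g -> f = g.
Proof.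
  intros [z [g0 [h0 [[Iz Tz] E1]]]] [z' [g1 [h1 [[Iz' Tz'] E2]]]]. subst.
  destruct (Iz' z) as [c _].
  destruct (Tz a) as [ta Hta].
  destruct (Iz' b) as [tb Htb].
  replace g0 with (c ∘ g1) by (rewrite (Hta g0), (Hta (c ∘ g1)); reflexivity).
  rewrite comp_assoc.
  replace (h0 ∘ c) with h1 by (rewrite (Htb h1), (Htb (h0 ∘ c)); reflexivity).
  reflexivity.
Qed.

Lemma zl {a b c : C} (f : Hom C b c) (g : Hom C a b) :
  is_zero_mor g -> is_zero_mor (f ∘ g).
Proof. intros [z [g0 [h0 [Hz ->]]]]. exists z, g0, (f ∘ h0). split; [exact Hz| apply comp_assoc]. Qed.

Lemma zr {a b c : C} (f : Hom C b c) (g : Hom C a b) :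
  is_zero_mor f -> is_zero_mor (f ∘ g).
Proof. intros [z [g0 [h0 [Hz ->]]]]. exists z, (g0 ∘ g), h0. split; [exact Hz| symmetry; apply comp_assoc]. Qed.

Lemma zr' {a b c d : C} (f : Hom C c d) (g : Hom C b c) (h : Hom C a b) :
  is_zero_mor (f ∘ g) -> is_zero_mor (f ∘ (g ∘ h)).
Proof. intros H; rewrite comp_assoc; apply zr; exact H. Qed.

Lemma kernel_mono {K A B : C} (k : Hom C K A) (f : Hom C A B) :
  is_kernel k f -> is_mono k.
Proof.
  intros [Hz Hu] x g h E. destruct (Hu x (k ∘ g)) as [w [_ Hw]].
  - rewrite comp_assoc; apply zr; exact Hz.
  - rewrite (Hw g eq_refl). symmetry. apply Hw. symmetry; exact E.
Qed.

Lemma prod_ext {A B P Q : C} (p1 : Hom C P A) (p2 : Hom C P B) (x y : Hom C Q P) :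
  is_product p1 p2 -> p1 ∘ x = p1 ∘ y -> p2 ∘ x = p2 ∘ y -> x = y.
Proof.
  intros H E1 E2. destruct (H Q (p1 ∘ x) (p2 ∘ x)) as [h [_ [_ U]]].
  rewrite (U x eq_refl eq_refl). symmetry. apply U; symmetry; assumption.
Qed.

Lemma pb_ext {A B Y P Q : C} (f : Hom C A Y) (g : Hom C B Y)
  (p1 : Hom C P A) (p2 : Hom C P B) (x y : Hom C Q P) :
  is_pullback f g p1 p2 -> p1 ∘ x = p1 ∘ y -> p2 ∘ x = p2 ∘ y -> x = y.
Proof.
  intros [Hc H] E1 E2. destruct (H Q (p1 ∘ x) (p2 ∘ x)) as [h [_ [_ U]]].
  - rewrite !comp_assoc, Hc. reflexivity.
  - rewrite (U x eq_refl eq_refl). symmetry. apply U; symmetry; assumption.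
Qed.

Lemma iso_id (a : C) : is_iso (idm a).
Proof. exists (idm a); split; apply comp_id_l. Qed.

Lemma prod_kernel {A B P : C} (p1 : Hom C P A) (p2 : Hom C P B)
  (z : Hom C B A) (i : Hom C B P) :
  is_product p1 p2 -> is_zero_mor z -> p1 ∘ i = z -> p2 ∘ i = idm B ->
  is_kernel i p1.
Proof.
  intros Hp Hz E1 E2. split.
  - rewrite E1; exact Hz.
  - intros Q q Hq. exists (p2 ∘ q). split.
    + apply (prod_ext p1 p2); auto.
      * rewrite comp_assoc, E1. apply zero_unique; [apply zr; exact Hz | exact Hq].
      * rewrite comp_assoc, E2, comp_id_l. reflexivity.
    + intros h' Eh. rewrite <- Eh, comp_assoc, E2, comp_id_l. reflexivity.
Qed.

Lemma prod_ex (t : C) (Ht : is_terminal t) (Hpb : has_pullbacks C) (A B : C) :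
  exists P (p1 : Hom C P A) (p2 : Hom C P B), is_product p1 p2.
Proof.
  destruct (Ht A) as [ta Hta]; destruct (Ht B) as [tb Htb].
  destruct (Hpb _ _ _ ta tb) as [P [p1 [p2 [Hc Hu]]]].
  exists P, p1, p2. intros Q q1 q2. apply Hu.
  destruct (Ht Q) as [tq Htq]. rewrite (Htq (ta ∘ q1)), (Htq (tb ∘ q2)). reflexivity.
Qed.

Lemma eq_ex (t : C) (Ht : is_terminal t) (Hpb : has_pullbacks C) {A Z : C}
  (g h : Hom C A Z) :
  exists E (e : Hom C E A), g ∘ e = h ∘ e /\
   forall Q (a : Hom C Q A), g ∘ a = h ∘ a ->
     exists w, e ∘ w = a /\ forall w', e ∘ w' = a -> w' = w.
Proof.
  destruct (prod_ex t Ht Hpb A Z) as [P [p1 [p2 Hp]]].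
  destruct (Hp A (idm A) g) as [u1 [Hu1a [Hu1b _]]].
  destruct (Hp A (idm A) h) as [u2 [Hu2a [Hu2b _]]].
  destruct (Hpb _ _ _ u1 u2) as [E [e1 [e2 [Hc Hu]]]].
  assert (E12 : e1 = e2).
  { transitivity (p1 ∘ (u1 ∘ e1)).
    - rewrite comp_assoc, Hu1a, comp_id_l. reflexivity.
    - rewrite Hc, comp_assoc, Hu2a, comp_id_l. reflexivity. }
  subst e2.
  exists E, e1. split.
  - rewrite <- Hu1b, <- Hu2b, <- !comp_assoc, Hc. reflexivity.
  - intros Q a Ha. destruct (Hu Q a a) as [w [Hw1 [Hw2 Hwu]]].
    + apply (prod_ext p1 p2); auto; rewrite !comp_assoc.
      * rewrite Hu1a, Hu2a. reflexivity.
      * rewrite Hu1b, Hu2b. exact Ha.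
    + exists w. split; auto.
Qed.

Lemma JE (HP : protomodular C) (t : C) (Ht : is_terminal t) (Hpb : has_pullbacks C)
  {K A B Z : C} (k : Hom C K A) (p : Hom C A B) (s : Hom C B A) (g h : Hom C A Z) :
  is_kernel k p -> p ∘ s = idm B -> g ∘ k = h ∘ k -> g ∘ s = h ∘ s -> g = h.
Proof.
  intros Hk Hps Hgk Hgs.
  destruct (eq_ex t Ht Hpb g h) as [E [e [He Hu]]].
  destruct (Hu K k Hgk) as [k' [Hk' _]].
  destruct (Hu B s Hgs) as [s' [Hs' _]].
  assert (Em : is_mono e).
  { intros x a b Eab. destruct (Hu x (e ∘ a)) as [w [_ Hw]].
    - rewrite !comp_assoc, He. reflexivity.
    - rewrite (Hw a eq_refl). symmetry; apply Hw; symmetry; exact Eab. }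
  assert (Hk'k : is_kernel k' (p ∘ e)).
  { destruct Hk as [Hz Hku]. split.
    - rewrite <- comp_assoc, Hk'. exact Hz.
    - intros Q q Hq. destruct (Hku Q (e ∘ q)) as [x [Hx Hxu]].
      + rewrite comp_assoc; exact Hq.
      + exists x. split.
        * apply Em. rewrite comp_assoc, Hk'. exact Hx.
        * intros h' Eh. apply Hxu. rewrite <- Hk', <- comp_assoc, Eh. reflexivity. }
  assert (Hiso : is_iso e).
  { apply (HP K E B K A B k' (p ∘ e) s' k p s (idm K) e (idm B)); auto.
    - rewrite <- comp_assoc, Hs'. exact Hps.
    - rewrite comp_id_r. exact Hk'.
    - rewrite comp_id_l. reflexivity.
    - rewrite comp_id_r. exact Hs'.
    - apply iso_id.
    - apply iso_id. }
  destruct Hiso as [ei [_ Hei]].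
  rewrite <- (comp_id_r g), <- (comp_id_r h), <- Hei, !comp_assoc, He.
  reflexivity.
Qed.

Lemma pb_iso {A B Y P P' : C} (f : Hom C A Y) (g : Hom C B Y)
  (p1 : Hom C P A) (p2 : Hom C P B) (phi : Hom C P' P) :
  is_pullback f g p1 p2 -> is_iso phi -> is_pullback f g (p1 ∘ phi) (p2 ∘ phi).
Proof.
  intros [Hc Hu] [phii [Hl Hr]]. split.
  - rewrite !comp_assoc, Hc. reflexivity.
  - intros Q q1 q2 Hq. destruct (Hu Q q1 q2 Hq) as [h [H1 [H2 U]]].
    exists (phii ∘ h). split; [|split].
    + rewrite <- comp_assoc, (comp_rw Hr), comp_id_l. exact H1.
    + rewrite <- comp_assoc, (comp_rw Hr), comp_id_l. exact H2.
    + intros h' E1 E2. rewrite <- (U (phi ∘ h')).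
      * rewrite comp_assoc, Hl, comp_id_l. reflexivity.
      * rewrite comp_assoc; exact E1.
      * rewrite comp_assoc; exact E2.
Qed.

End H.
Local Notation "f ∘ g" := (comp f g) (at level 40, left associativity).

Ltac ra := repeat rewrite <- comp_assoc.
Ltac ra_in H := repeat rewrite <- comp_assoc in H.
Ltac rw H := first [ rewrite H | rewrite (comp_rw H) | rewrite (comp_rw3 H) ]; ra.
Ltac zt := first [ assumption | (apply zr; zt) | (apply zr'; zt) | (apply zl; zt) ].
Ltac zeq := apply zero_unique; zt.

Theorem proposition5p4 (C : Category) :
  pointed C -> has_finite_limits C -> protomodular C ->
  forall (S X : C) (m : Hom C S X),
    proto_complete X -> is_normal_mono m -> is_characteristic m.
Proof.
  intros [z0 Hz0] [[t0 Ht0] Hpb] HP S X m Hpc [Y' [f Hmf]] Y n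
    [Hnmono [R [r1 [r2 [HR [XX [p1 [p2 [Hprod [mt [Hmt1 [Hmt2 Hmtpb]]]]]]]]]]]].
  destruct HR as [Hjm [[d [Hd1 Hd2]] [[tt [Ht1 Ht2]] Htr]]].
  assert (zero_ex : forall a b : C, exists z : Hom C a b, is_zero_mor z).
  { intros a b. destruct Hz0 as [I T]. destruct (T a) as [ga _]. destruct (I b) as [hb _].
    exists (hb ∘ ga), z0, ga, hb. split; [split; assumption | reflexivity]. }
  pose proof (proj1 Hmf) as Hfm.
  pose proof (kernel_mono _ _ Hmf) as Hmmono.
  destruct (zero_ex X X) as [zXX HzXX].
  destruct (Hprod X zXX (idm X)) as [i2 [Hi2a [Hi2b _]]].
  set (k := mt ∘ i2).
  assert (Hk : is_kernel k r1).
  { split.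
    - unfold k. rw Hmt1. rw Hi2a. zt.
    - intros Q q Hq. destruct Hmtpb as [Hcomm Hu].
      destruct (zero_ex Q X) as [zQX HzQX].
      destruct (Hu Q q zQX) as [w [Hw1 [Hw2 Hwu]]]. { zeq. }
      assert (Ew : i2 ∘ (p2 ∘ w) = w).
      { apply (prod_ext p1 p2); auto.
        - rw Hi2a. rewrite Hw2. zeq.
        - rw Hi2b. rewrite comp_id_l. reflexivity. }
      exists (p2 ∘ w). split.
      + unfold k. ra. rewrite Ew. exact Hw1.
      + intros h' Eh'. unfold k in Eh'. ra_in Eh'.
        assert (E2 : i2 ∘ h' = w).
        { apply Hwu. exact Eh'. rw Hi2a. zeq. }
        rewrite <- E2. rw Hi2b. rewrite comp_id_l. reflexivity. }

  destruct (Hpc R k) as [rho Hrho].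
  { exists Y, r1. split; [exists d; exact Hd1 | exact Hk]. }
  pose proof (kernel_mono _ _ Hk) as Hkmono.
  pose proof (proj1 Hk) as Hr1k.
  assert (Hr2k : r2 ∘ k = n).
  { unfold k. rw Hmt2. rewrite Hi2b, comp_id_r. reflexivity. }
  clearbody k.
  destruct (eq_ex t0 Ht0 Hpb (f ∘ rho) (f ∘ (rho ∘ (d ∘ r1)))) as [T [e [He Heu]]].
  ra_in He.
  assert (Hemono : is_mono e).
  { intros x a b Eab. destruct (Heu x (e ∘ a)) as [w [_ Hw]].
    - ra. rw He. reflexivity.
    - rewrite (Hw a eq_refl). symmetry; apply Hw; symmetry; exact Eab. }
  destruct (Heu S (k ∘ m)) as [kT [HkT _]].
  { ra. rw Hrho. rewrite comp_id_l. zeq. }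
  assert (HkTk : is_kernel kT (r1 ∘ e)).
  { split.
    - ra. rewrite HkT. zt.
    - intros Q z Hz. destruct (proj2 Hk Q (e ∘ z)) as [x [Hx Hxu]].
      { rewrite comp_assoc; exact Hz. }
      assert (Hz' : is_zero_mor (r1 ∘ (e ∘ z))) by (rewrite comp_assoc; exact Hz).
      assert (Hfx : is_zero_mor (f ∘ x)).
      { assert (E : f ∘ (rho ∘ (e ∘ z)) = f ∘ x).
        { rewrite <- Hx. rw Hrho. rewrite comp_id_l. reflexivity. }
        rewrite <- E. rw He. zt. }
      destruct (proj2 Hmf Q x Hfx) as [s [Hs Hsu]].
      exists s. split.
      + apply Hemono. rewrite comp_assoc, HkT. rewrite <- comp_assoc, Hs. exact Hx.
      + intros h' Eh'. apply Hsu. apply Hxu.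
        rewrite comp_assoc, <- HkT, <- comp_assoc, Eh'. reflexivity. }
  pose proof (proj1 HkTk) as Hr1ekT.
  destruct (Heu Y d) as [dT [HdT _]].
  { ra. rewrite Hd1, comp_id_r. reflexivity. }
  destruct (prod_ex t0 Ht0 Hpb S S) as [SS [s1 [s2 HSS]]].
  destruct (zero_ex S S) as [zSS HzSS].
  destruct (HSS S (idm S) zSS) as [j1 [Hj1a [Hj1b _]]].
  destruct (HSS S zSS (idm S)) as [j2 [Hj2a [Hj2b _]]].
  destruct (HSS S (idm S) (idm S)) as [dl [Hdla [Hdlb _]]].
  destruct (Hprod SS (m ∘ s1) (m ∘ s2)) as [mm [Hmma [Hmmb _]]].
  assert (E1 : mt ∘ (mm ∘ j1) = tt ∘ (k ∘ m)).
  { apply Hjm; ra.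
    - rw Hmt1. rw Hmma. rewrite Hj1a, comp_id_r. rw Ht1. rw Hr2k. reflexivity.
    - rw Hmt2. rw Hmmb. rewrite Hj1b. rw Ht2. zeq. }
  assert (E2 : mt ∘ (mm ∘ dl) = d ∘ (n ∘ m)).
  { apply Hjm; ra.
    - rw Hmt1. rw Hmma. rewrite Hdla, comp_id_r. rw Hd1. rewrite comp_id_l. reflexivity.
    - rw Hmt2. rw Hmmb. rewrite Hdlb, comp_id_r. rw Hd2. rewrite comp_id_l. reflexivity. }
  assert (E3 : mt ∘ (mm ∘ j2) = k ∘ m).
  { apply Hjm; ra.
    - rw Hmt1. rw Hmma. rewrite Hj2a. zeq.
    - rw Hmt2. rw Hmmb. rewrite Hj2b, comp_id_r. rw Hr2k. reflexivity. }
  assert (Hj2k : is_kernel j2 s1) by (apply (prod_kernel s1 s2 zSS j2); auto).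
  set (hh := f ∘ (rho ∘ (mt ∘ mm))).
  assert (Hhh : hh = (hh ∘ j1) ∘ s1).
  { apply (JE HP t0 Ht0 Hpb j2 s1 j1).
    - exact Hj2k.
    - exact Hj1a.
    - unfold hh. ra. rewrite Hj2a, E3. rw Hrho. rewrite comp_id_l. zeq.
    - unfold hh. ra. rewrite Hj1a, comp_id_r. reflexivity. }
  assert (Hhj1 : hh ∘ j1 = f ∘ (rho ∘ (d ∘ (n ∘ m)))).
  { transitivity (hh ∘ dl).
    - assert (Ed : hh ∘ dl = ((hh ∘ j1) ∘ s1) ∘ dl) by (f_equal; exact Hhh).
      rewrite Ed. ra. rewrite Hdla, comp_id_r. reflexivity.
    - unfold hh. ra. rewrite E2. reflexivity. }
  assert (Hsym : f ∘ (rho ∘ (tt ∘ (k ∘ m))) = f ∘ (rho ∘ (d ∘ (n ∘ m)))).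
  { rewrite <- Hhj1. unfold hh. ra. rewrite E1. reflexivity. }
  assert (Hh2 : f ∘ (rho ∘ (mt ∘ mm)) = f ∘ (rho ∘ (d ∘ (n ∘ (m ∘ s1))))).
  { transitivity ((hh ∘ j1) ∘ s1); [exact Hhh | rewrite Hhj1; ra; reflexivity]. }
  assert (Hr1edT : (r1 ∘ e) ∘ dT = idm Y) by (rewrite <- comp_assoc, HdT; exact Hd1).
  assert (Htd : tt ∘ d = d).
  { apply Hjm; [rw Ht1; rewrite Hd2, Hd1 | rw Ht2; rewrite Hd1, Hd2]; reflexivity. }
  assert (HeqT : is_equivalence_relation (r1 ∘ e) (r2 ∘ e)).
  { split; [|split; [|split]].
    - intros Q a b Ea Eb. apply Hemono. ra_in Ea. ra_in Eb. apply Hjm; assumption.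
    - exists dT. split; ra; rewrite HdT; assumption.
    - destruct (Heu T (tt ∘ e)) as [tT [HtT _]].
      { ra. rw Ht1.
        apply (JE HP t0 Ht0 Hpb kT (r1 ∘ e) dT).
        - exact HkTk.
        - exact Hr1edT.
        - ra. rewrite HkT. rw Hr2k. exact Hsym.
        - ra. rewrite HdT, Htd. rw Hd2. rewrite comp_id_r. reflexivity. }
      exists tT. split; ra; rewrite HtT; [rw Ht1 | rw Ht2]; reflexivity.
    - intros P q1 q2 HPB.
      destruct (Hpb _ _ _ r2 r1) as [PR [u1 [u2 HPR]]].
      destruct (Htr PR u1 u2 HPR) as [tR [HtR1 HtR2]].
      pose proof HPB as [HPBc HPBu].
      destruct (proj2 HPR P (e ∘ q1) (e ∘ q2)) as [ze [Hze1 [Hze2 _]]].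
      { ra_in HPBc. ra. exact HPBc. }
      destruct (HPBu T (idm T) (dT ∘ (r2 ∘ e))) as [sg [Hsg1 [Hsg2 _]]].
      { rewrite comp_id_r. ra. rw HdT. rw Hd1. rewrite comp_id_l. reflexivity. }
      destruct (zero_ex S T) as [zST HzST].
      destruct (HPBu S zST kT) as [ka [Hka1 [Hka2 _]]]. { zeq. }
      assert (Hka : is_kernel ka q1).
      { split.
        - rewrite Hka1; exact HzST.
        - intros Q w Hw. destruct (proj2 HkTk Q (q2 ∘ w)) as [s [Hs Hsu]].
          { rewrite comp_assoc, <- HPBc, <- comp_assoc. apply zl. exact Hw. }
          exists s. split.
          + apply (pb_ext (r2 ∘ e) (r1 ∘ e) q1 q2); [exact HPB | |].
            * rw Hka1. zeq.
            * rw Hka2. exact Hs.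
          + intros h' Eh'. apply Hsu. rewrite <- Hka2, <- comp_assoc, Eh'. reflexivity. }
      destruct (Heu P (tR ∘ ze)) as [tT [HtT _]].
      { ra. rw HtR1. rewrite Hze1.
        assert (Eka : tR ∘ (ze ∘ ka) = k ∘ m).
        { apply Hjm.
          - rw HtR1. rw Hze1. rewrite Hka1. zeq.
          - rw HtR2. rw Hze2. rewrite Hka2, HkT. reflexivity. }
        assert (Esg : tR ∘ (ze ∘ sg) = e).
        { apply Hjm.
          - rw HtR1. rw Hze1. rewrite Hsg1, comp_id_r. reflexivity.
          - rw HtR2. rw Hze2. rewrite Hsg2. rw HdT. rw Hd2. rewrite comp_id_l. reflexivity. }
        apply (JE HP t0 Ht0 Hpb ka q1 sg).
        - exact Hka.
        - exact Hsg1.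
        - ra. rewrite Eka. rw Hrho. rewrite comp_id_l. rewrite Hka1. zeq.
        - ra. rewrite Esg, Hsg1, comp_id_r. exact He. }
      exists tT. split; ra; rewrite HtT; [rw HtR1; rewrite Hze1 | rw HtR2; rewrite Hze2]; reflexivity. }
  split.
  { intros x a b Eab. apply Hmmono, Hnmono. ra_in Eab. exact Eab. }
  exists T, (r1 ∘ e), (r2 ∘ e). split; [exact HeqT|].
  exists SS, s1, s2. split; [exact HSS|].
  destruct (Heu SS (mt ∘ mm)) as [mtT [HmtT _]].
  { ra. rw Hmt1. rw Hmma. exact Hh2. }
  exists mtT.
  assert (Hc1 : (r1 ∘ e) ∘ mtT = (n ∘ m) ∘ s1).
  { ra. rewrite HmtT. rw Hmt1. rewrite Hmma. reflexivity. }
  assert (Hc2 : (r2 ∘ e) ∘ mtT = (n ∘ m) ∘ s2).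
  { ra. rewrite HmtT. rw Hmt2. rewrite Hmmb. reflexivity. }
  split; [exact Hc1|]. split; [exact Hc2|].
  destruct (Hpb _ _ _ (r1 ∘ e) (n ∘ m)) as [PB [b1 [b2 HPB]]].
  pose proof HPB as [HPBc HPBu].
  destruct (HPBu SS mtT s1 Hc1) as [phi [Hphi1 [Hphi2 _]]].
  destruct (HPBu S (dT ∘ (n ∘ m)) (idm S)) as [sg [Hsg1 [Hsg2 _]]].
  { rewrite comp_id_r. ra. rw HdT. rw Hd1. rewrite comp_id_l. reflexivity. }
  destruct (HPBu S kT zSS) as [ka [Hka1 [Hka2 _]]]. { zeq. }
  assert (Hka : is_kernel ka b2).
  { split.
    - rewrite Hka2; exact HzSS.
    - intros Q w Hw. destruct (proj2 HkTk Q (b1 ∘ w)) as [s [Hs Hsu]].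
      { rewrite comp_assoc, HPBc, <- comp_assoc. apply zl; exact Hw. }
      exists s. split.
      + apply (pb_ext (r1 ∘ e) (n ∘ m) b1 b2); [exact HPB | |].
        * rw Hka1. exact Hs.
        * rw Hka2. zeq.
      + intros h' Eh'. apply Hsu. rewrite <- Hka1, <- comp_assoc, Eh'. reflexivity. }
  assert (Hiso : is_iso phi).
  { apply (HP S SS S S PB S j2 s1 dl ka b2 sg (idm S) phi (idm S)).
    - exact Hj2k.
    - exact Hdla.
    - exact Hka.
    - exact Hsg2.
    - rewrite comp_id_r. apply (pb_ext (r1 ∘ e) (n ∘ m) b1 b2); [exact HPB | |].
      + rw Hphi1. rewrite Hka1. apply Hemono. rw HmtT. rewrite E3, HkT. reflexivity.
      + rw Hphi2. rewrite Hka2. exact Hj2a.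
    - rewrite comp_id_l. exact Hphi2.
    - rewrite comp_id_r. apply (pb_ext (r1 ∘ e) (n ∘ m) b1 b2); [exact HPB | |].
      + rw Hphi1. rewrite Hsg1. apply Hemono. rw HmtT. rewrite E2. rw HdT. reflexivity.
      + rw Hphi2. rewrite Hsg2. exact Hdla.
    - apply iso_id.
    - apply iso_id. }
  pose proof (pb_iso _ _ _ _ phi HPB Hiso) as Hfin.
  rewrite Hphi1, Hphi2 in Hfin. exact Hfin.
Qed.
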